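(* Fix integers $k,r\ge 1$ and $n\ge 0$. Let $R_{k,r}(n)=\frac{r}{kn+r}\binom{kn+r}{n}$. Then $R_{k,r}(n)$ equals the number of ordered $r$-tuples $(T_1,\dots,T_r)$ for which there is a sequence of nonnegative integers $(i_1,\dots,i_r)$ with $i_1+\dots+i_r=n$ such that $T_j\in\mathrm{SVT}(i_j^2,\rho^{(i_j)})$ for each $j$, where $\rho^{(i)}$ is the density on the two-row shape $i^2=(i,i)$ with $\rho_{1,c}=1$ and $\rho_{2,c}=k-1$ for all columns $c$ (for $i_j=0$, $T_j$ is the unique empty tableau).
   Context: For $i\ge 0$, $i^2$ denotes the two-row rectangular shape $(i,i)$. A density on a shape $\lambda$ is an assignment of a nonnegative integer $\rho_{i,j}$ to every cell $(i,j)$ (row $i$, column $j$); let $N=\sum\rho_{i,j}$. A standard set-valued Young tableau of shape $\lambda$ and density $\rho$ assigns to each cell $(i,j)$ a set $S_{i,j}$ with $|S_{i,j}|=\rho_{i,j}$, the sets partitioning $[N]$, such that every element of $S_{i,j}$ is smaller than every element of $S_{i,j+1}$ and of $S_{i+1,j}$ whenever those cells exist (conditions involving an empty set are vacuous). $\mathrm{SVT}(\lambda,\rho)$ is the set of these tableaux. *)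

(* Defs.v *)
From HB Require Import structures.
From mathcomp Require Import all_boot all_order all_algebra.
Set Implicit Arguments. Unset Strict Implicit. Unset Printing Implicit Defensive.

(* Cells of the two-row shape (i,i): (row, column) with row : 'I_2 (0 = first
   row, 1 = second row) and column : 'I_i.
   The density rho^(i): first-row cells have density 1, second-row cells k-1,
   so N = i * k.  The ground set [N] is represented by 'I_(i*k)
   (order-preserving shift 1..N -> 0..N-1).
   A set-valued tableau is a partition of [N] into the sets S_cell; it is the
   same as the function  f : [N] -> cells  sending x to the cell whose set
   contains x, with S_cell = f^{-1}(cell). *)

Definition cell (i : nat) : finType := ('I_2 * 'I_i)%type.

Definition density (k : nat) (i : nat) (c : cell i) : nat :=
  if val c.1 == 0 then 1 else k - 1.

Definition next_cell (i : nat) (c d : cell i) : bool :=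
  ((c.1 == d.1) && (val d.2 == (val c.2).+1)) ||
  ((c.2 == d.2) && (val c.1 == 0) && (val d.1 == 1)).

Definition is_svt (k i : nat) (f : {ffun 'I_(i * k) -> cell i}) : bool :=
  [forall c : cell i, #|[set x | f x == c]| == density k c] &&
  [forall x : 'I_(i * k), forall y : 'I_(i * k),
      next_cell (f x) (f y) ==> (val x < val y)].

Definition SVT (k i : nat) : finType :=
  {f : {ffun 'I_(i * k) -> cell i} | @is_svt k i f}.

(* Ordered r-tuples (T_1,...,T_r) with T_j in SVT(i_j^2, rho^(i_j)) and
   i_1 + ... + i_r = n.  Each i_j <= n, so i_j ranges over 'I_n.+1. *)
Definition svt_tuples (k r n : nat) : {set {ffun 'I_r -> {i : 'I_n.+1 & SVT k i}}} :=
  [set t : {ffun 'I_r -> {i : 'I_n.+1 & SVT k i}} | (\sum_(j < r) val (tag (t j)) == n)%N].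

(* Main.v *)
Require Import Defs.
From HB Require Import structures.
From mathcomp Require Import all_boot all_order all_algebra.
From mathcomp Require Import zify.
Import GRing.Theory Num.Theory.
Set Implicit Arguments. Unset Strict Implicit. Unset Printing Implicit Defensive.

Section Alg.
Variable mu : nat.
Fixpoint P (n : nat) : nat -> nat :=
  match n with
  | 0 => fun _ => 1
  | n'.+1 => fix Pr r := match r with 0 => 0 | r'.+1 => Pr r' + P n' (r'.+1 + mu) end
  end.
Lemma P0r r : P 0 r = 1. Proof. by []. Qed.
Lemma PS0 n : P n.+1 0 = 0. Proof. by []. Qed.
Lemma PSS n r : P n.+1 r.+1 = P n.+1 r + P n (r.+1 + mu). Proof. by []. Qed.

Fixpoint gen (n : nat) : nat -> seq (seq bool) :=
  match n with
  | 0 => fun s => [:: nseq s false]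
  | n'.+1 => fix g s := map (cons true) (gen n' (s + mu)) ++
                        (match s with 0 => [::] | s'.+1 => map (cons false) (g s') end)
  end.

Fixpoint ok (s n : nat) (w : seq bool) : bool :=
  match w with
  | [::] => (s == 0) && (n == 0)
  | b :: w' => if b then (0 < n) && ok (s + mu) n.-1 w' else (0 < s) && ok s.-1 n w'
  end.

Lemma genS0 n : gen n.+1 0 = map (cons true) (gen n mu).
Proof. by rewrite /= cats0 add0n. Qed.
Lemma genSS n s : gen n.+1 s.+1 = map (cons true) (gen n (s.+1 + mu)) ++ map (cons false) (gen n.+1 s).
Proof. by []. Qed.

Lemma size_gen n s : size (gen n s) = P n s.+1.
Proof.
elim: n s => [|n IH] s //.
elim: s => [|s IHs].
  by rewrite genS0 size_map IH PSS PS0 add0n add1n.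
rewrite genSS size_cat !size_map IH IHs [in RHS]PSS addnC; congr (_ + P n _); lia.
Qed.

Lemma mem_map_cons c (L : seq (seq bool)) b w :
  (b :: w \in map (cons c) L) = (b == c) && (w \in L).
Proof.
elim: L => [|v L IH] /=; first by rewrite andbF.
by rewrite !inE IH eqseq_cons; case: (b == c).
Qed.

Lemma nil_map_cons c (L : seq (seq bool)) : ([::] \in map (cons c) L) = false.
Proof. by elim: L. Qed.

Lemma ok0 s w : ok s 0 w = (w == nseq s false).
Proof.
elim: w s => [|b w IH] [|s] //=; case: b => //=; by rewrite ?IH ?eqseq_cons.
Qed.

Lemma mem_gen n s w : (w \in gen n s) = ok s n w.
Proof.
elim: n s w => [|n IH] s w.
  by rewrite /= inE ok0.
elim: s w => [|s IHs] [|b w].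
- by rewrite genS0 nil_map_cons.
- by rewrite genS0 mem_map_cons IH /= add0n; case: b.
- by rewrite genSS mem_cat !nil_map_cons.
- by rewrite genSS mem_cat !mem_map_cons IH IHs /=; case: b; rewrite /= ?orbF.
Qed.

Lemma uniq_gen n s : uniq (gen n s).
Proof.
elim: n s => [|n IH] s //.
elim: s => [|s IHs].
  by rewrite genS0 map_inj_uniq //; move=> ? ? [].
rewrite genSS cat_uniq !map_inj_uniq ?IH ?IHs //; try by move=> ? ? [].
rewrite andbT /=; apply/hasPn => w /mapP [v _ ->]; by rewrite /= mem_map_cons.
Qed.


Lemma okP s n w : ok s n w ->
  [/\ count id w = n, count negb w = mu * n + s &
      forall m, count negb (take m w) <= mu * count id (take m w) + s].
Proof.
elim: w s n => [|b w IH] s n /=.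
  by case/andP => /eqP -> /eqP ->; split; rewrite ?muln0 //; case.
case: b => /andP [hp /IH [h1 h2 h3]]; split.
- by rewrite /= h1 add1n prednK.
- by rewrite /= h2; move: hp; case: n {h1 h2} => // n _; rewrite mulnS /=; lia.
- case=> [|m] /=; first lia.
  by have := h3 m; rewrite /= add1n mulnS; lia.
- by rewrite /= h1.
- by rewrite /= h2; lia.
- case=> [|m] /=; first lia.
  have := h3 m; rewrite /= add1n; lia.
Qed.

Lemma okI s n w : count id w = n -> count negb w = mu * n + s ->
  (forall m, count negb (take m w) <= mu * count id (take m w) + s) -> ok s n w.
Proof.
elim: w s n => [|b w IH] s n /=.
  by move=> <-; rewrite muln0 add0n => <-; rewrite !eqxx.
case: b => /= h1 h2 h3.
  apply/andP; split; first lia.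
  apply: IH; first lia.
    by move: h2; rewrite -h1 add1n mulnS /=; lia.
  by move=> m; have := h3 m.+1; rewrite /= add1n mulnS; lia.
have s0 : 0 < s by have := h3 1; rewrite /= take0 /=; lia.
apply/andP; split => //.
apply: IH; first lia.
  by move: h2; lia.
by move=> m; have := h3 m.+1; rewrite /=; lia.
Qed.
Lemma P_fact n r :
  P n r.+1 * n`! * (mu * n + r.+1)`! = r.+1 * (mu.+1 * n + r)`!.
Proof.
elim: n r => [|n IH] r.
  by rewrite P0r !muln0 !add0n mul1n fact0 mul1n factS.
elim: r => [|r IHr].
  rewrite PSS PS0 add0n.
  have := IH mu.
  have -> : mu * n.+1 + 1 = (mu * n + mu).+1 by rewrite mulnS; lia.
  have -> : mu.+1 * n.+1 + 0 = (mu.+1 * n + mu).+1 by rewrite mulnS; lia.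
  have -> : (1 + mu) = mu.+1 by lia.
  rewrite !factS.
  have -> : (mu * n + mu.+1) = (mu * n + mu).+1 by lia.
  rewrite factS.
  move: (P n mu.+1) (n`!) ((mu * n + mu)`!) ((mu.+1 * n + mu)`!) => a b c d H.
  nia.
rewrite PSS.
have := IH (r.+1 + mu).
have E1 : mu * n + (r.+1 + mu).+1 = (mu * n.+1 + r.+1).+1 by rewrite mulnS; lia.
have E2 : mu.+1 * n + (r.+1 + mu) = mu.+1 * n.+1 + r by rewrite (mulnS mu.+1); lia.
have E3 : mu * n.+1 + r.+2 = (mu * n.+1 + r.+1).+1 by lia.
have E4 : mu.+1 * n.+1 + r.+1 = (mu.+1 * n.+1 + r).+1 by lia.
rewrite E1 E2 E3 E4.
move: IHr. rewrite [n.+1`!]factS [(mu * n.+1 + r.+1).+1`!]factS [(mu.+1 * n.+1 + r).+1`!]factS.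
set c := n`!. set d := (mu * n.+1 + r.+1)`!. set e := (mu.+1 * n.+1 + r)`!.
set a := P n.+1 r.+1. set b := P n (r.+1 + mu).+1.
move=> H1 H2.
have -> : (a + b) * (n.+1 * c) * ((mu * n.+1 + r.+1).+1 * d) =
  (mu * n.+1 + r.+1).+1 * (a * (n.+1 * c) * d) + n.+1 * (b * c * ((mu * n.+1 + r.+1).+1 * d)) by nia.
rewrite H1 H2.
nia.
Qed.

Lemma P_conv n r : P n r.+1 = \sum_(i < n.+1) P i 1 * P (n - i) r.
Proof.
elim: n r => [|n IH] r.
  by rewrite big_ord1 /= .
elim: r => [|r IHr].
  rewrite big_ord_recr /= subnn P0r muln1 big1 ?add0n // => i _.
  by rewrite subSn ?PS0 ?muln0 // -ltnS.
rewrite PSS IHr.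
rewrite big_ord_recr /= subnn.
rewrite [in RHS]big_ord_recr /= subnn P0r.
have -> : \sum_(i < n.+1) P i 1 * P (n.+1 - i) r.+1 =
   \sum_(i < n.+1) P i 1 * P (n.+1 - i) r + \sum_(i < n.+1) P i 1 * P (n - i) (r.+1 + mu).
  rewrite -big_split /=; apply: eq_bigr => i _.
  by rewrite subSn ?PSS ?mulnDr // -ltnS.
rewrite -IH.
have -> : r.+2 + mu = (r.+1 + mu).+1 by lia.
by rewrite addnAC.
Qed.
End Alg.


Lemma P_formula k n r : (1 <= k)%N -> (1 <= r)%N ->
  ((r%:R / (k * n + r)%:R * ('C(k * n + r, n))%:R : rat) = (P k.-1 n r)%:R)%R.
Proof.
case: k => // mu _; case: r => // r _ /=.
have H := P_fact mu n r.
have B : 'C(mu.+1 * n + r.+1, n) * (n`! * (mu * n + r.+1)`!) = (mu.+1 * n + r.+1)`!.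
  have E : (mu.+1 * n + r.+1 - n) = mu * n + r.+1 by rewrite mulSn; lia.
  rewrite -E; apply: bin_fact; rewrite mulSn; lia.
have E2 : mu.+1 * n + r.+1 = (mu.+1 * n + r).+1 by lia.
rewrite E2 factS in B.
rewrite E2.
have nz : (((n`! * (mu * n + r.+1)`!)%:R : rat) != 0)%R.
  by rewrite pnatr_eq0 muln_eq0 negb_or -!lt0n !fact_gt0.
apply: (mulIf nz).
rewrite -[RHS]natrM mulnA H -!mulrA -natrM B natrM mulKf ?natrM //.
by rewrite pnatr_eq0.
Qed.


Section Tup.
Variables (T : finType) (w : T -> nat).

Definition consf r (p : T * {ffun 'I_r -> T}) : {ffun 'I_r.+1 -> T} :=
  [ffun j => if unlift ord0 j is Some j' then p.2 j' else p.1].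
Definition unconsf r (t : {ffun 'I_r.+1 -> T}) : T * {ffun 'I_r -> T} :=
  (t ord0, [ffun j => t (lift ord0 j)]).

Lemma consfK r : cancel (@consf r) (@unconsf r).
Proof.
case=> x u; rewrite /unconsf /consf /= ffunE unlift_none; congr pair.
by apply/ffunP => j; rewrite !ffunE liftK.
Qed.

Lemma unconsfK r : cancel (@unconsf r) (@consf r).
Proof.
move=> t; apply/ffunP => j; rewrite /consf /unconsf ffunE /=.
case: unliftP => [j'|] ->; by rewrite ?ffunE.
Qed.

Lemma card_tup_rec r m :
  #|[set t : {ffun 'I_r.+1 -> T} | \sum_(j < r.+1) w (t j) == m]| =
  \sum_(x : T) #|[set u : {ffun 'I_r -> T} | w x + \sum_(j < r) w (u j) == m]|.
Proof.
rewrite -sum1dep_card (reindex (@consf r)); last first.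
  by exists (@unconsf r) => ? _; [apply: consfK | apply: unconsfK].
rewrite (eq_bigl (fun p : T * {ffun 'I_r -> T} => xpredT p.1 && (w p.1 + \sum_(j < r) w (p.2 j) == m))); last first.
  case=> x u /=; rewrite big_ord_recl /consf /= !ffunE unlift_none.
  by congr (_ + _ == _); apply: eq_bigr => j _; rewrite ffunE liftK.
rewrite -(pair_big_dep xpredT (fun x (u : {ffun 'I_r -> T}) => w x + \sum_(j < r) w (u j) == m) (fun _ _ => 1)) /=.
by apply: eq_bigr => x _; rewrite -sum1dep_card.
Qed.
End Tup.

Section Count.
Variables (mu B : nat) (J : 'I_B -> finType).
Hypothesis hF : forall i : 'I_B, #|J i| = P mu i 1.

Lemma count_tuples r m : m < B ->
  #|[set t : {ffun 'I_r -> {i : 'I_B & J i}} | \sum_(j < r) val (tag (t j)) == m]| = P mu m r.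
Proof.
elim: r m => [|r IH] m mB.
  case: m mB => [|m] mB.
    rewrite (_ : [set t | _] = setT) ?cardsT ?card_ffun ?card_ord //.
    by apply/setP => t; rewrite !inE big_ord0.
  rewrite (_ : [set t | _] = set0) ?cards0 //.
  by apply/setP => t; rewrite !inE big_ord0.
rewrite (card_tup_rec (fun p : {i : 'I_B & J i} => val (tag p))).
rewrite (eq_bigr (fun p => (val (tag p) <= m) * P mu (m - val (tag p)) r)); last first.
  move=> p _; case: leqP => hp.
    rewrite mul1n -IH; last by apply: leq_ltn_trans (leq_subr _ _) mB.
    apply: eq_card => u; rewrite !inE; move: hp; set a := val (tag p); set b := \sum_(j < r) _; move=> hp; apply/eqP/eqP; lia.
  rewrite mul0n; apply/eqP; rewrite cards_eq0; apply/eqP/setP => u; rewrite !inE.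
  move: hp; set a := val (tag p); set b := \sum_(j < r) _; move=> hp; by apply/negbTE; apply/eqP; lia.
rewrite -(sig_big_dep (fun i => true) (fun i _ => true) (fun i _ => (val i <= m) * P mu (m - val i) r)) /=.
rewrite (eq_bigr (fun i : 'I_B => P mu i 1 * ((val i <= m) * P mu (m - val i) r))); last first.
  by move=> i _; rewrite sum_nat_const -hF; congr (_ * _); apply: eq_card.
rewrite P_conv (big_ord_widen B (fun i => P mu i 1 * P mu (m - i) r) mB) [RHS]big_mkcond.
by apply: eq_bigr => i _; rewrite ltnS; case: (_ <= _); rewrite ?mul1n ?muln0.
Qed.
End Count.

Lemma count_take_le (a : pred bool) w m : count a (take m w) <= count a w.
Proof. by rewrite -{2}(cat_take_drop m w) count_cat leq_addr. Qed.

Lemma count_take_mono (a : pred bool) w m1 m2 : m1 <= m2 ->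
  count a (take m1 w) <= count a (take m2 w).
Proof. by move=> h; rewrite -(take_takel w h) count_take_le. Qed.

Lemma count_takeS (a : pred bool) w x : x < size w ->
  count a (take x.+1 w) = count a (take x w) + a (nth false w x).
Proof. by move=> h; rewrite (take_nth false h) -cats1 count_cat /= addn0. Qed.

Lemma bridge n (w : seq bool) (a : pred bool) m : size w = n -> m <= n ->
  count a (take m w) = #|[set y : 'I_n | (y < m) && a (nth false w y)]|.
Proof.
move=> hs hm; subst n.
rewrite -(map_nth_iota0 false hm) count_map -sum1_count -sum1dep_card.
rewrite (eq_bigl (fun y : 'I_(size w) => a (nth false w y) && (y < m))); last by move=> y; rewrite andbC.
rewrite -(big_ord_widen_cond (size w) (fun j => a (nth false w j)) (fun _ => 1) hm).
have -> : iota 0 m = index_iota 0 m by rewrite /index_iota subn0.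
by rewrite big_mkord.
Qed.

Lemma cnt_interval (a : pred bool) w lo hi :
  \sum_(j < size w | a (nth false w j) && (lo <= count a (take j w) < hi)) 1 =
  minn hi (count a w) - lo.
Proof.
elim/last_ind: w => [|w b IH].
  by rewrite big_ord0 /= minn0.
rewrite size_rcons big_mkcond big_ord_recr /= -big_mkcond /=.
rewrite (eq_bigl (fun j : 'I_(size w) => a (nth false w j) && (lo <= count a (take j w) < hi))); last first.
  move=> j; rewrite nth_rcons ltn_ord -cats1 takel_cat //.
  by apply: ltnW.
rewrite IH nth_rcons ltnn eqxx -cats1 take_size_cat // count_cat /= addn0.
case: (a b) => /=; last by rewrite addn0 addn0.
case: (leqP lo (count a w)) => h1; case: (ltnP (count a w) hi) => h2 /=; lia.
Qed.

Lemma card_interval n (a : pred bool) w lo hi : size w = n ->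
  #|[set x : 'I_n | a (nth false w x) && (lo <= count a (take x w) < hi)]| =
  minn hi (count a w) - lo.
Proof. by move=> hs; subst n; rewrite -sum1dep_card cnt_interval. Qed.
Lemma I2eq (a b : 'I_2) : (a == b) = ((val a == 0) == (val b == 0)).
Proof. by case: a => [[|[|?]] ?] //; case: b => [[|[|?]] ?]. Qed.

Lemma card_ord_lt n c : c <= n -> #|[set b : 'I_n | b < c]| = c.
Proof.
move=> h; rewrite -sum1dep_card -(big_ord_widen_cond n xpredT (fun _ => 1) h).
by rewrite sum1_card card_ord.
Qed.

Section SVT.
Variables (k i : nat).
Hypothesis hk : 0 < k.
Local Notation N := (i * k).
Local Notation mu := k.-1.

Definition dens (rho : 'I_2) := if val rho == 0 then 1 else mu.
Lemma densityE (c : cell i) : density k c = dens c.1.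
Proof. by rewrite /density /dens subn1. Qed.

Section F.
Variable f : {ffun 'I_N -> cell i}.
Hypothesis Hf : is_svt f.

Lemma Hd c : #|[set x | f x == c]| = density k c.
Proof. by case/andP: Hf => /forallP /(_ c) /eqP. Qed.

Lemma Hn x y : next_cell (f x) (f y) -> x < y.
Proof. by case/andP: Hf => _ /forallP /(_ x) /forallP /(_ y) /implyP. Qed.

Lemma sum_density (Pr : pred (cell i)) :
  #|[set x | Pr (f x)]| = \sum_(d | Pr d) density k d.
Proof.
rewrite -sum1dep_card (partition_big f Pr) //.
apply: eq_bigr => d Pd; rewrite -Hd -sum1dep_card.
apply: eq_bigl => x; case: eqP => [->|]; by rewrite ?Pd ?andbF.
Qed.

Lemma card_row_lt (rho : 'I_2) c : c <= i ->
  #|[set x | ((f x).1 == rho) && (nat_of_ord (f x).2 < c)]| = dens rho * c.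
Proof.
move=> hc.
have E := sum_density (fun d : cell i => (d.1 == rho) && (nat_of_ord d.2 < c)).
rewrite /= in E; rewrite E.
rewrite (eq_bigr (fun _ => dens rho)); last by move=> d /andP [/eqP <- _]; rewrite densityE.
rewrite sum_nat_cond_const mulnC; congr (_ * _).
rewrite (_ : [set d : cell i | _] = setX [set rho] [set b : 'I_i | b < c]).
  by rewrite cardsX cards1 mul1n (card_ord_lt hc).
by apply/setP => -[a b]; rewrite !inE.
Qed.

Lemma exists_cell (c : cell i) : 0 < density k c -> exists z, f z = c.
Proof.
rewrite -Hd card_gt0 => /set0Pn [z]; rewrite inE => /eqP <-; by exists z.
Qed.

Lemma dens_pos x : 0 < dens (f x).1.
Proof.
rewrite -densityE -Hd card_gt0; apply/set0Pn; exists x; by rewrite inE.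
Qed.

Lemma chain_d d : forall x y, (f x).1 = (f y).1 ->
  nat_of_ord (f y).2 = nat_of_ord (f x).2 + d.+1 -> x < y.
Proof.
elim: d => [|d IH] x y e1 e2.
  apply: Hn; rewrite /next_cell e1 eqxx /= e2 addn1 eqxx //.
have hc : nat_of_ord (f x).2 + 1 < i by have := ltn_ord (f y).2; lia.
have [z hz] : exists z, f z = ((f x).1, Ordinal hc) by apply: exists_cell; rewrite densityE dens_pos.
have xz : x < z.
  by apply: Hn; apply/orP; left; rewrite hz /= eqxx /=; apply/eqP; lia.
apply: (ltn_trans xz); apply: IH; rewrite hz /=; [exact: e1 | by rewrite e2 -addnA].
Qed.

Lemma chain x y : (f x).1 = (f y).1 -> nat_of_ord (f x).2 < nat_of_ord (f y).2 -> x < y.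
Proof.
move=> e1 lt; apply: (chain_d (d := nat_of_ord (f y).2 - nat_of_ord (f x).2 - 1)) => //; lia.
Qed.

Lemma down x y : val (f x).1 = 0 -> val (f y).1 = 1 ->
  nat_of_ord (f x).2 <= nat_of_ord (f y).2 -> x < y.
Proof.
move=> r0 r1; rewrite leq_eqVlt => /orP [/eqP e|lt].
  apply: Hn; rewrite /next_cell r0 r1 /= orbC.
  by rewrite (_ : (f x).2 == (f y).2) //; apply/eqP/val_inj.
have [z hz] : exists z, f z = ((f y).1, (f x).2) by apply: exists_cell; rewrite densityE dens_pos.
apply: (@ltn_trans z).
  apply: Hn; rewrite /next_cell hz /= eqxx r0 r1 /= orbT //.
by apply: chain; rewrite hz.
Qed.

Lemma col_lower (x : 'I_N) :
  dens (f x).1 * nat_of_ord (f x).2 <= #|[set y : 'I_N | (y < x) && ((f y).1 == (f x).1)]|.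
Proof.
rewrite -card_row_lt; last by apply: ltnW.
apply: subset_leq_card; apply/subsetP => y; rewrite !inE => /andP [/eqP e l].
by rewrite e eqxx andbT; apply: chain.
Qed.

Lemma col_upper (x : 'I_N) :
  #|[set y : 'I_N | (y < x) && ((f y).1 == (f x).1)]| < dens (f x).1 * (nat_of_ord (f x).2).+1.
Proof.
rewrite -card_row_lt //.
set A := [set y | _ && (nat_of_ord (f y).2 < _)].
have xA : x \in A by rewrite inE eqxx /=.
rewrite (cardsD1 x A) xA add1n ltnS.
apply: subset_leq_card; apply/subsetP => y; rewrite !inE => /andP [l /eqP e].
rewrite e eqxx /= neq_ltn l /= ltnS leqNgt; apply/negP => h.
by have := chain (esym e) h; rewrite ltnNge (ltnW l).
Qed.

End F.

Definition word (f : {ffun 'I_N -> cell i}) : seq bool := [seq val (f x).1 == 0 | x <- enum 'I_N].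
Lemma size_word f : size (word f) = N.
Proof. by rewrite size_map size_enum_ord. Qed.
Lemma nth_word f (y : 'I_N) : nth false (word f) y = (val (f y).1 == 0).
Proof. by rewrite (nth_map y) ?size_enum_ord // nth_ord_enum. Qed.

Lemma i_pos (x : 'I_N) : 0 < i.
Proof.
have h : 0 < i * k by apply: leq_ltn_trans (leq0n x) (ltn_ord x).
by move: h; rewrite muln_gt0 => /andP [].
Qed.

Definition mkcol (x : 'I_N) (c : nat) : 'I_i := insubd (Ordinal (i_pos x)) c.
Definition rowof (b : bool) : 'I_2 := if b then ord0 else ord_max.
Definition colnat (w : seq bool) (x : nat) :=
  if nth false w x then count id (take x w) else count negb (take x w) %/ mu.
Definition build (w : seq bool) : {ffun 'I_N -> cell i} :=
  [ffun x : 'I_N => (rowof (nth false w x), mkcol x (colnat w x))].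

Lemma cnt_same (f : {ffun 'I_N -> cell i}) (x : 'I_N) (a : pred bool) :
  (forall b, a b = (b == (val (f x).1 == 0))) ->
  count a (take x (word f)) = #|[set y : 'I_N | (y < x) && ((f y).1 == (f x).1)]|.
Proof.
move=> H; rewrite (bridge _ (size_word f) (ltnW (ltn_ord x))).
by apply: eq_card => y; rewrite !inE nth_word H I2eq.
Qed.

Lemma colnat_word (f : {ffun 'I_N -> cell i}) (x : 'I_N) : is_svt f -> colnat (word f) x = (f x).2.
Proof.
move=> Hf; have lo := col_lower Hf x; have up := col_upper Hf x.
have dp := dens_pos Hf x.
rewrite /colnat nth_word; move: lo up dp; rewrite /dens.
case: ifP => r0 lo up dp.
  rewrite (cnt_same (a := id)); last by move=> b; rewrite r0 eqb_id.
  move: lo up; set C := #|_|; set c := nat_of_ord _; rewrite !mul1n; lia.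
rewrite (cnt_same (a := negb)); last by move=> b; rewrite r0 eqbF_neg.
move: lo up; set C := #|_| => lo up.
apply/eqP; rewrite eqn_leq; apply/andP; split.
  by rewrite -ltnS ltn_divLR // mulnC.
by rewrite leq_divRL // mulnC.
Qed.

Lemma build_word (f : {ffun 'I_N -> cell i}) : is_svt f -> build (word f) = f.
Proof.
move=> Hf; apply/ffunP => x; rewrite ffunE.
rewrite [RHS]surjective_pairing; congr pair.
  apply/val_inj; rewrite nth_word /rowof.
  by case: (f x).1 => [[|[|?]] ?].
by apply/val_inj; rewrite val_insubd colnat_word // ltn_ord.
Qed.

Lemma I2_1 (a : 'I_2) : (val a == 0) = false -> val a = 1.
Proof. by case: a => [[|[|?]] ?]. Qed.

Lemma word_ok (f : {ffun 'I_N -> cell i}) : is_svt f -> ok mu 0 i (word f).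
Proof.
move=> Hf.
have tot : forall (a : pred bool) (rho : 'I_2), (forall y : 'I_N, a (val (f y).1 == 0) = ((f y).1 == rho)) ->
    count a (word f) = dens rho * i.
  move=> a rho H.
  rewrite -(take_size (word f)) size_word (bridge _ (size_word f) (leqnn _)).
  rewrite -(card_row_lt Hf rho (leqnn i)); apply: eq_card => y.
  by rewrite !inE ltn_ord /= nth_word H ltn_ord andbT.
apply: okI.
- by rewrite (tot _ ord0) /dens ?mul1n // => y; rewrite I2eq.
- rewrite (tot _ ord_max); first by rewrite addn0.
  by move=> y; rewrite I2eq /=; case: (_ == 0).
have key : forall m, m <= N -> count negb (take m (word f)) <= mu * count id (take m (word f)) + 0.
  move=> m hm; rewrite addn0.
  rewrite !(bridge _ (size_word f) hm).
  set D := [set y : 'I_N | _ && ~~ _].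
  set U := [set y : 'I_N | _ && id _].
  case: (posnP #|D|) => [->|]; first by [].
  rewrite card_gt0 => /set0Pn [y0 y0D].
  have Py0 : (fun y : 'I_N => (y < m) && ~~ (val (f y).1 == 0)) y0.
    by move: y0D; rewrite inE nth_word.
  case: (@arg_maxnP _ y0 (fun y : 'I_N => (y < m) && ~~ (val (f y).1 == 0)) (fun y => nat_of_ord y) Py0) => ys /andP [ysm ysr] ysmax.
  have r1 : val (f ys).1 = 1 by apply: I2_1; apply: negbTE.
  have mupos : dens (f ys).1 = mu by rewrite /dens r1.
  set c := nat_of_ord (f ys).2.
  have h1 : #|D| <= mu * c.+1.
    rewrite -mupos -(card_row_lt Hf (f ys).1 (ltn_ord (f ys).2)).
    apply: subset_leq_card; apply/subsetP => y; rewrite !inE nth_word => /andP [ym yr].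
    have e : (f y).1 == (f ys).1 by rewrite I2eq (negbTE yr) (negbTE ysr).
    rewrite e /= ltnS leqNgt; apply/negP => h.
    have lt := chain Hf (esym (eqP e)) h.
    have hy : (y < m) && ~~ (val (f y).1 == 0) by rewrite ym.
    by have := ysmax y hy; rewrite /geq /= leqNgt lt.
  have h2 : c.+1 <= #|U|.
    have := card_row_lt Hf ord0 (ltn_ord (f ys).2); rewrite /dens /= mul1n => <-.
    apply: subset_leq_card; apply/subsetP => y; rewrite !inE nth_word => /andP [yr yc].
    have r0 : val (f y).1 = 0 by move/eqP: yr => ->.
    rewrite r0 eqxx andbT.
    apply: (ltn_trans _ ysm); apply: (down Hf r0 r1); by rewrite -ltnS.
  by apply: leq_trans h1 _; rewrite leq_mul2l h2 orbT.
move=> m; case: (leqP m N) => hm; first exact: key.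
rewrite take_oversize ?size_word ?(ltnW hm) //.
by have := key N (leqnn _); rewrite take_oversize ?size_word.
Qed.

Lemma word_build w : size w = N -> word (build w) = w.
Proof.
move=> hs; rewrite /word.
rewrite (eq_map (g := fun x : 'I_N => nth false w x)); last first.
  by move=> x; rewrite ffunE /=; case: (nth false w x).
rewrite (map_comp (nth false w) val) val_enum_ord map_nth_iota0 ?hs //.
by rewrite -hs take_size.
Qed.

Section Build.
Variable w : seq bool.
Hypothesis hw : ok mu 0 i w.

Lemma hw_counts : [/\ count id w = i, count negb w = mu * i &
   forall m, count negb (take m w) <= mu * count id (take m w)].
Proof.
case: (okP hw) => c1 c2 c3; split => //; first by rewrite c2 addn0.
by move=> m; have := c3 m; rewrite addn0.
Qed.

Lemma size_w : size w = N.
Proof.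
case: hw_counts => c1 c2 _.
have := count_predC id w; rewrite c1.
have -> : count (predC id) w = count negb w by apply: eq_count.
rewrite c2 => <-; rewrite -{2}(prednK hk) mulnS; lia.
Qed.

Lemma colnat_lt (x : 'I_N) : colnat w x < i.
Proof.
case: hw_counts => c1 c2 _.
have xs : x < size w by rewrite size_w.
rewrite /colnat; case: ifP => b.
  have := count_takeS id xs; rewrite b /= addn1 => e.
  by have := count_take_le id w x.+1; rewrite e c1.
have := count_takeS negb xs; rewrite b /= addn1 => e.
have := count_take_le negb w x.+1; rewrite e c2 => h.
have mp : 0 < mu by case: (posnP mu) h => // ->.
by rewrite ltn_divLR // [i * mu]mulnC.
Qed.

Lemma build1 (x : 'I_N) : (build w x).1 = rowof (nth false w x).
Proof. by rewrite ffunE. Qed.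
Lemma build2 (x : 'I_N) : nat_of_ord (build w x).2 = colnat w x.
Proof. by rewrite ffunE /= val_insubd colnat_lt. Qed.
Lemma build2v (x : 'I_N) : val (build w x).2 = colnat w x.
Proof. exact: build2. Qed.

Lemma rowof0 b : (val (rowof b) == 0) = b.
Proof. by case: b. Qed.
Lemma rowofE b1 b2 : (rowof b1 == rowof b2) = (b1 == b2).
Proof. by case: b1; case: b2. Qed.

Lemma divn_eqE (D mu' j : nat) : 0 < mu' ->
  (D %/ mu' == j) = (j * mu' <= D < j.+1 * mu').
Proof.
move=> mp; rewrite eqn_leq -ltnS ltn_divLR // leq_divRL //.
by rewrite andbC.
Qed.

Lemma build_svt : is_svt (build w).
Proof.
case: hw_counts => c1 c2 c3.
have hs := size_w.
apply/andP; split.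
  apply/forallP => -[rho j]; rewrite densityE /=.
  have E : [set x | build w x == (rho, j)] =
      [set x : 'I_N | (rowof (nth false w x) == rho) && (colnat w x == j)].
    apply/setP => x; rewrite !inE; case E: (build w x) => [a b]; rewrite xpair_eqE -[a]/((a,b).1) -E build1 -[b]/((a,b).2) -E; congr (_ && _).
    by rewrite -build2.
  rewrite E; case: (boolP (val rho == 0)) => r0.
    have -> : rho = ord0 by apply/val_inj; apply/eqP.
    rewrite (eq_finset (fun x : 'I_N => nth false w x && (j <= count id (take x w) < j.+1))); last first.
      move=> x; rewrite /colnat; case: (nth false w x) => //=.
      by rewrite eqn_leq ltnS andbC.
    rewrite (card_interval _ _ _ hs) c1 /dens /=.
    by rewrite (minn_idPl (ltn_ord j)) subSnn.
  have -> : rho = ord_max by apply/val_inj; apply: I2_1; apply: negbTE.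
  rewrite /dens /=.
  case: (posnP mu) => mp.
    rewrite mp cards_eq0; apply/eqP/setP => x; rewrite !inE.
    apply/negbTE; apply/negP => /andP [hx _].
    have : 0 < count negb w.
      rewrite -has_count; apply/hasP; exists (nth false w x); last by case: (nth false w x) hx.
      by apply: mem_nth; rewrite hs.
    by rewrite c2 mp.
  rewrite (eq_finset (fun x : 'I_N => ~~ nth false w x && (j * mu <= count negb (take x w) < j.+1 * mu))); last first.
    move=> x; rewrite /colnat; case: (nth false w x) => //=.
    by rewrite divn_eqE.
  rewrite (card_interval _ _ _ hs) c2.
  rewrite (minn_idPl _); last by rewrite mulnC leq_mul2l ltn_ord orbT.
  by apply/eqP; rewrite mulSn addnK.
apply/forallP => x; apply/forallP => y; apply/implyP.
have xs : x < size w by rewrite hs.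
have ys : y < size w by rewrite hs.
rewrite /next_cell !build1 rowofE !rowof0.
have mono : forall (a : pred bool), count a (take x w) < count a (take y w) -> x < y.
  move=> a h; rewrite ltnNge; apply/negP => yx.
  by have := count_take_mono a w yx; rewrite leqNgt h.
case/orP.
  case/andP => /eqP eb; rewrite !build2v /colnat -eb.
  case: ifP => bx /eqP e.
    by apply: (mono id); rewrite e.
  apply: (mono negb); rewrite ltnNge; apply/negP => h.
  by have := leq_div2r mu h; rewrite e ltnn.
case/andP => /andP [/eqP e0 bx].
have e := f_equal val e0; rewrite !build2v in e.
move=> by_.
have byf : nth false w y = false by move: by_; case: (nth false w y).
move: e; rewrite /colnat bx byf => e.
have cy := c3 y.+1.
rewrite (count_takeS negb ys) (count_takeS id ys) byf /= addn0 addn1 in cy.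
have mp : 0 < mu by case: (posnP mu) cy => // ->.
apply: (mono id).
have := leq_trunc_div (count negb (take y w)) mu; rewrite -e => h.
rewrite -(ltn_pmul2l mp); apply: leq_ltn_trans cy; by rewrite mulnC.
Qed.
End Build.

Lemma card_SVT : #|SVT k i| = P mu i 1.
Proof.
pose wd := fun s : SVT k i => word (val s).
have inj : injective wd.
  move=> s1 s2 e; apply: val_inj.
  by rewrite -(build_word (valP s1)) -(build_word (valP s2)) /wd -/(wd s1) e.
rewrite cardE -(size_map wd) -(size_gen mu i 0).
apply: perm_size; apply: uniq_perm.
- by rewrite map_inj_uniq // enum_uniq.
- exact: uniq_gen.
move=> w; rewrite mem_gen; apply/mapP/idP.
  by case=> s _ ->; apply: word_ok (valP s).
move=> hw; exists (exist _ (build w) (build_svt hw)); first by rewrite mem_enum.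
by rewrite /wd /= word_build // size_w.
Qed.

End SVT.

Unset Implicit Arguments.
Local Open Scope ring_scope.

Theorem proposition2 (k r n : nat) (hk : (1 <= k)%N) (hr : (1 <= r)%N) :
  (r%:R / (k * n + r)%:R * ('C(k * n + r, n))%:R : rat)
    = (#|svt_tuples k r n|)%:R.
Proof.
rewrite P_formula //; congr (_%:R).
symmetry.
exact: (@count_tuples k.-1 n.+1 (fun i : 'I_n.+1 => SVT k i) (fun i => card_SVT i hk) r n (ltnSn n)).
Qed.
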